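(* Let $\mathcal{S}=\{s_1,\dots,s_N\}$ be a finite state space, $\mathcal{A}$ a finite action space, $\gamma\in(0,1)$, and consider the real MDP $\langle\mathcal{S},\mathcal{A},\mathbb{P},R,\gamma\rangle$ and the DT MDP $\langle\mathcal{S},\mathcal{A},\mathbb{P}',R',\gamma\rangle$. Then for every deterministic policy $\pi:\mathcal{S}\to\mathcal{A}$, $$\|V^*_{\mathrm{real}}-V^\pi_{\mathrm{real}}\|\le\frac{2}{1-\gamma}\max_i\bar d(s_i,s_i)+\frac{1+\gamma}{1-\gamma}\|V^*_{\mathrm{DT}}-V^\pi_{\mathrm{DT}}\|.$$
   Context: $\mathbb{P}(\cdot|s,a),\mathbb{P}'(\cdot|s,a)$ are probability distributions on $\mathcal{S}$; $R,R':\mathcal{S}\times\mathcal{A}\to\mathbb{R}$. $V^\pi_{\mathrm{real}}$ is the unique solution of $V(s)=R(s,\pi(s))+\gamma\sum_{\tilde s}\mathbb{P}(\tilde s|s,\pi(s))V(\tilde s)$, $V^*_{\mathrm{real}}$ the unique solution of $V(s)=\max_a\{R(s,a)+\gamma\sum_{\tilde s}\mathbb{P}(\tilde s|s,a)V(\tilde s)\}$; $V^\pi_{\mathrm{DT}},V^*_{\mathrm{DT}}$ analogously with $\mathbb{P}',R'$. $\|V^*_{\mathrm{real}}-V^\pi_{\mathrm{real}}\|=\max_i\{V^*_{\mathrm{real}}(s_i)-V^\pi_{\mathrm{real}}(s_i)\}$, similarly for DT. For distributions $P,Q$ on $\mathcal{S}$ and a cost $d:\mathcal{S}\times\mathcal{S}\to[0,\infty)$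 (not required to vanish on the diagonal; first argument a real-MDP state, second a DT-MDP state), $W_1(P,Q;d)=\min_\Lambda\sum_{i,j}\lambda_{i,j}d(s_i,s_j)$ over nonnegative $N\times N$ matrices with row sums $P(s_i)$ and column sums $Q(s_j)$. Define $d_0\equiv0$, $d_n(s_i,s_j)=\max_a\{|R(s_i,a)-R'(s_j,a)|+\gamma W_1(\mathbb{P}(\cdot|s_i,a),\mathbb{P}'(\cdot|s_j,a);d_{n-1})\}$; the DT bisimulation metric $\bar d$ is the pointwise limit of the nondecreasing sequence $(d_n)$, and it satisfies $\bar d(s_i,s_j)=\max_a\{|R(s_i,a)-R'(s_j,a)|+\gamma W_1(\mathbb{P}(\cdot|s_i,a),\mathbb{P}'(\cdot|s_j,a);\bar d)\}$. *)

(* Defs.v *)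
From HB Require Import structures.
From mathcomp Require Import all_boot all_order all_algebra.
From mathcomp Require Import all_classical all_reals all_analysis.
Set Implicit Arguments. Unset Strict Implicit. Unset Printing Implicit Defensive.
Import Order.TTheory GRing.Theory Num.Theory.
Import numFieldTopology.Exports numFieldNormedType.Exports.
Local Open Scope classical_set_scope.
Local Open Scope ring_scope.

Section MDP.
Variables (R : realType) (S A : finType).

Definition fmax (T : finType) (f : T -> R) : R := sup (range f).

Definition is_kernel (P : S -> A -> S -> R) : Prop :=
  forall s a, (forall t, 0 <= P s a t) /\ \sum_(t : S) P s a t = 1.

Definition is_policy_value (P : S -> A -> S -> R) (Rw : S -> A -> R)
  (gamma : R) (pi : S -> A) (V : S -> R) : Prop :=
  forall s, V s = Rw s (pi s) + gamma * \sum_(t : S) P s (pi s) t * V t.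

Definition is_optimal_value (P : S -> A -> S -> R) (Rw : S -> A -> R)
  (gamma : R) (V : S -> R) : Prop :=
  forall s, V s = fmax (fun a : A => Rw s a + gamma * \sum_(t : S) P s a t * V t).

(* couplings of p (rows, real-MDP states) and q (columns, DT-MDP states) *)
Definition coupling (p q : S -> R) : set (S -> S -> R) :=
  [set c | (forall i j, 0 <= c i j) /\ (forall i, \sum_(j : S) c i j = p i)
           /\ (forall j, \sum_(i : S) c i j = q j)].

Definition W1 (p q : S -> R) (d : S -> S -> R) : R :=
  inf [set \sum_(i : S) \sum_(j : S) c i j * d i j | c in coupling p q].

Fixpoint dseq (P P' : S -> A -> S -> R) (Rw Rw' : S -> A -> R) (gamma : R)
    (n : nat) : S -> S -> R :=
  match n with
  | 0%N => fun _ _ => 0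
  | n'.+1 => fun s t => fmax (fun a : A =>
      `|Rw s a - Rw' t a| + gamma * W1 (P s a) (P' t a) (dseq P P' Rw Rw' gamma n'))
  end.

Definition dbar (P P' : S -> A -> S -> R) (Rw Rw' : S -> A -> R) (gamma : R)
    (s t : S) : R :=
  limn (fun n => dseq P P' Rw Rw' gamma n s t).

End MDP.

(* Main.v *)
Require Import Defs.
From HB Require Import structures.
From mathcomp Require Import all_boot all_order all_algebra.
From mathcomp Require Import all_classical all_reals all_analysis.
From mathcomp Require Import ring lra.
Import Order.TTheory GRing.Theory Num.Theory.
Import numFieldTopology.Exports numFieldNormedType.Exports.
Local Open Scope classical_set_scope.
Local Open Scope ring_scope.

Module Aux.
Set Implicit Arguments. Unset Strict Implicit. Unset Printing Implicit Defensive.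
Section H.
Variable R : realType.

Lemma fmaxP (T : finType) (f : T -> R) (x0 : T) :
  exists x, fmax f = f x /\ (forall y, f y <= f x).
Proof.
case: (@arg_maxP _ _ T x0 predT f isT) => x _ H.
exists x; split => //.
rewrite /fmax; apply/le_anti/andP; split.
- apply: ge_sup; first by exists (f x0), x0.
  by move=> _ [y _ <-]; exact: H.
- apply: ub_le_sup.
  by exists (f x) => _ [y _ <-]; exact: H.
  by exists x.
by move=> y; exact: H.
Qed.

Lemma fmax_ub (T : finType) (f : T -> R) y : f y <= fmax f.
Proof. by case: (fmaxP f y) => x [-> H]; exact: H. Qed.

Lemma fmax_le (T : finType) (f : T -> R) b (x0 : T) :
  (forall y, f y <= b) -> fmax f <= b.
Proof. by case: (fmaxP f x0) => x [-> _] H; exact: H. Qed.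

Lemma fmax_empty (T : finType) (f : T -> R) : (forall x : T, False) -> fmax f = 0.
Proof.
move=> hT; rewrite /fmax.
have -> : range f = set0 by apply/seteqP; split => // y [x]; case: (hT x).
exact: sup0.
Qed.

Definition dist (T : finType) (p : T -> R) := (forall t, 0 <= p t) /\ \sum_t p t = 1.

Lemma avg_le (T : finType) (p f : T -> R) b : dist p -> (forall t, f t <= b) ->
  \sum_t p t * f t <= b.
Proof.
move=> [p0 p1] hf.
apply: (@le_trans _ _ (\sum_t p t * b)).
  by apply: ler_sum => t _; apply: ler_wpM2l.
by rewrite -mulr_suml p1 mul1r.
Qed.

Lemma avg_ge (T : finType) (p f : T -> R) b : dist p -> (forall t, b <= f t) ->
  b <= \sum_t p t * f t.
Proof.
move=> [p0 p1] hf.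
apply: (@le_trans _ _ (\sum_t p t * b)); last first.
  by apply: ler_sum => t _; apply: ler_wpM2l.
by rewrite -mulr_suml p1 mul1r.
Qed.

Definition cost (S : finType) (c d : S -> S -> R) := \sum_i \sum_j c i j * d i j.

Lemma prod_coupling (S : finType) (p q : S -> R) : dist p -> dist q ->
  coupling p q (fun i j => p i * q j).
Proof.
move=> [p0 p1] [q0 q1]; split; first by move=> i j; apply: mulr_ge0.
split=> [i|j]; first by rewrite -mulr_sumr q1 mulr1.
by rewrite -mulr_suml p1 mul1r.
Qed.

Lemma W1_le (S : finType) (p q : S -> R) d c : (forall i j, 0 <= d i j) ->
  coupling p q c -> W1 p q d <= cost c d.
Proof.
move=> d0 hc; rewrite /W1; apply: ge_inf; last by exists c.
exists 0 => _ [c' [c0 _] <-].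
by apply: sumr_ge0 => i _; apply: sumr_ge0 => j _; apply: mulr_ge0.
Qed.

Lemma W1_ge (S : finType) (p q : S -> R) d x : dist p -> dist q ->
  (forall c, coupling p q c -> x <= cost c d) -> x <= W1 p q d.
Proof.
move=> hp hq H; rewrite /W1; apply: lb_le_inf.
  by exists (cost (fun i j => p i * q j) d), (fun i j => p i * q j) => //; exact: prod_coupling.
by move=> _ [c hc <-]; exact: H.
Qed.

Lemma W1_ge0 (S : finType) (p q : S -> R) d : dist p -> dist q ->
  (forall i j, 0 <= d i j) -> 0 <= W1 p q d.
Proof.
move=> hp hq d0; apply: W1_ge => // c [c0 _].
by apply: sumr_ge0 => i _; apply: sumr_ge0 => j _; apply: mulr_ge0.
Qed.

Lemma W1_mono (S : finType) (p q : S -> R) d d' : dist p -> dist q ->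
  (forall i j, 0 <= d i j) -> (forall i j, d i j <= d' i j) -> W1 p q d <= W1 p q d'.
Proof.
move=> hp hq d0 dd; apply: W1_ge => // c hc.
apply: le_trans (W1_le d0 hc) _.
case: hc => c0 _.
by apply: ler_sum => i _; apply: ler_sum => j _; apply: ler_wpM2l.
Qed.

Lemma cost_le_const (S : finType) (p q : S -> R) c d b : coupling p q c -> dist p ->
  (forall i j, d i j <= b) -> cost c d <= b.
Proof.
move=> [c0 [cr _]] [_ p1] db.
apply: (@le_trans _ _ (\sum_i \sum_j c i j * b)).
  by apply: ler_sum => i _; apply: ler_sum => j _; apply: ler_wpM2l.
under eq_bigr do rewrite -mulr_suml cr.
by rewrite -mulr_suml p1 mul1r.
Qed.

Lemma cost_addc (S : finType) (p q : S -> R) c d k : coupling p q c -> dist p ->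
  cost c (fun i j => d i j + k) = cost c d + k.
Proof.
move=> [c0 [cr _]] [_ p1]; rewrite /cost.
under eq_bigr do under eq_bigr do rewrite mulrDr.
under eq_bigr do rewrite big_split /= -mulr_suml cr.
by rewrite big_split /= -mulr_suml p1 mul1r.
Qed.

Lemma coupling_diff (S : finType) (p q : S -> R) c (f g : S -> R) : coupling p q c ->
  \sum_i p i * f i - \sum_j q j * g j = \sum_i \sum_j c i j * (f i - g j).
Proof.
move=> [c0 [cr cc]].
under [RHS]eq_bigr do under eq_bigr do rewrite mulrBr.
under [RHS]eq_bigr do rewrite sumrB -mulr_suml cr.
rewrite sumrB; congr (_ - _).
rewrite exchange_big /=; apply: eq_bigr => j _.
by rewrite -mulr_suml cc.
Qed.

Lemma limit_le (x L M gamma : R) : 0 < gamma -> gamma < 1 ->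
  (forall n, x <= L + gamma ^+ n * M) -> x <= L.
Proof.
move=> g0 g1 H.
have hc : (fun n => L + gamma ^+ n * M) @ \oo --> L + 0 * M.
  apply: cvgD; first exact: cvg_cst.
  apply: cvgMr_tmp; apply: cvg_expr.
  by rewrite ger0_norm ?ltW.
have := @limr_ge _ _ _ _ x _ (cvgP _ hc).
rewrite (cvg_lim _ hc) // mul0r addr0; apply.
by near=> n; exact: H.
Unshelve. all: by end_near.
Qed.

Lemma fmax_diff (T : finType) (f g : T -> R) b (x0 : T) :
  (forall a, `|f a - g a| <= b) -> `|fmax f - fmax g| <= b.
Proof.
move=> H.
case: (fmaxP f x0) => x1 [-> hf]; case: (fmaxP g x0) => x2 [-> hg].
have := hf x2; have := hg x1.
move: (H x1) (H x2); rewrite !ler_norml => /andP[? ?] /andP[? ?] ? ?.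
apply/andP; split; lra.
Qed.

End H.

Section M.
Variables (R : realType) (S A : finType) (gamma : R)
  (P P' : S -> A -> S -> R) (Rw Rw' : S -> A -> R) (a0 : A).
Hypotheses (g0 : 0 < gamma) (g1 : gamma < 1)
  (hP : is_kernel P) (hP' : is_kernel P').

Let D n := dseq P P' Rw Rw' gamma n.

Lemma distP s a : dist (P s a). Proof. exact: hP. Qed.
Lemma distP' s a : dist (P' s a). Proof. exact: hP'. Qed.

Lemma DS n s t : D n.+1 s t = fmax (fun a : A =>
      `|Rw s a - Rw' t a| + gamma * W1 (P s a) (P' t a) (D n)).
Proof. by []. Qed.

Lemma D_ge0 n s t : 0 <= D n s t.
Proof.
elim: n s t => [|n IH] s t; first by [].
rewrite DS; apply: le_trans (fmax_ub _ a0).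
apply: addr_ge0 => //; apply: mulr_ge0; first exact: ltW.
apply: W1_ge0 => //.
Qed.

Lemma D_mono n s t : D n s t <= D n.+1 s t.
Proof.
elim: n s t => [|n IH] s t; first exact: D_ge0.
rewrite (DS n.+1) DS; apply: (@fmax_le _ _ _ _ a0) => a.
apply: le_trans (fmax_ub _ a); rewrite lerD2l; apply: ler_wpM2l; first exact: ltW.
apply: W1_mono => //; try exact: distP; try exact: distP'; exact: D_ge0.
Qed.

Let K := fmax (fun x : S * S * A => `|Rw x.1.1 x.2 - Rw' x.1.2 x.2|).
Let B := K / (1 - gamma).

Lemma D_bound n s t : D n s t <= B.
Proof.
have K0 : 0 <= K by apply: le_trans (fmax_ub _ (t, t, a0)).
have B0 : 0 <= B by apply: divr_ge0 => //; rewrite subr_ge0; exact: ltW.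
have hB : K = B - gamma * B.
  by rewrite /B; field; rewrite subr_eq0 gt_eqF.
elim: n s t => [|n IH] s t; first by move: B0.
rewrite DS; apply: (@fmax_le _ _ _ _ a0) => a.
have h1 : `|Rw s a - Rw' t a| <= K by exact: (fmax_ub _ (s, t, a)).
have h2 : W1 (P s a) (P' t a) (D n) <= B.
  apply: le_trans (W1_le (c := fun i j => P s a i * P' t a j) _ _) _.
  - exact: D_ge0.
  - by apply: prod_coupling; [exact: distP | exact: distP'].
  apply: (@cost_le_const _ _ (P s a) (P' t a)); last exact: IH; last exact: distP.
  by apply: prod_coupling; [exact: distP | exact: distP'].
have h3 : gamma * W1 (P s a) (P' t a) (D n) <= gamma * B by apply: ler_wpM2l => //; exact: ltW.
lra.
Qed.

Lemma D_le_dbar n s t : D n s t <= dbar P P' Rw Rw' gamma s t.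
Proof.
rewrite /dbar; apply: nondecreasing_cvgn_le.
  by apply/nondecreasing_seqP => m; exact: D_mono.
apply: cvgP; apply: nondecreasing_cvgn.
  by apply/nondecreasing_seqP => m; exact: D_mono.
by exists B => _ [m _ <-]; exact: D_bound.
Qed.


Section E.
Variables (Vr Vd : S -> R).
Hypotheses (hVr : is_optimal_value P Rw gamma Vr) (hVd : is_optimal_value P' Rw' gamma Vd).

Let Qr s a := Rw s a + gamma * \sum_t P s a t * Vr t.
Let Qd s a := Rw' s a + gamma * \sum_t P' s a t * Vd t.
Let M := fmax (fun x : S * S => `|Vr x.1 - Vd x.2|).

Lemma Q_of_E n : (forall s t, `|Vr s - Vd t| <= D n s t + gamma ^+ n * M) ->
  forall s t a, `|Qr s a - Qd t a| <= D n.+1 s t + gamma ^+ n.+1 * M.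
Proof.
move=> HE s t a.
set X := \sum_t0 P s a t0 * Vr t0.
set Y := \sum_t0 P' t a t0 * Vd t0.
have hW : `|X - Y| - gamma ^+ n * M <= W1 (P s a) (P' t a) (D n).
  apply: W1_ge; [exact: distP | exact: distP' | move=> c hc].
  rewrite /X /Y (coupling_diff _ _ hc).
  have hc' := hc; case: hc' => c0 _.
  have := cost_addc (D n) (gamma ^+ n * M) hc (distP s a).
  set C := cost c (D n) => hC.
  suff : `|\sum_i \sum_j c i j * (Vr i - Vd j)| <= cost c (fun i j => D n i j + gamma ^+ n * M).
    rewrite hC; lra.
  apply: le_trans (ler_norm_sum _ _ _) _; apply: ler_sum => i _.
  apply: le_trans (ler_norm_sum _ _ _) _; apply: ler_sum => j _.
  rewrite normrM (ger0_norm (c0 i j)); apply: ler_wpM2l => //; exact: HE.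
have e1 : Qr s a - Qd t a = (Rw s a - Rw' t a) + gamma * (X - Y) by rewrite /Qr /Qd /X /Y; ring.
rewrite e1; apply: le_trans (ler_normD _ _) _.
rewrite normrM (gtr0_norm g0).
have h1 : gamma * `|X - Y| <= gamma * (W1 (P s a) (P' t a) (D n) + gamma ^+ n * M).
  by apply: ler_wpM2l; [exact: ltW | lra].
have h2 : gamma * (W1 (P s a) (P' t a) (D n) + gamma ^+ n * M) =
   gamma * W1 (P s a) (P' t a) (D n) + gamma ^+ n.+1 * M by rewrite exprS; ring.
have h3 := fmax_ub (fun a : A =>
      `|Rw s a - Rw' t a| + gamma * W1 (P s a) (P' t a) (D n)) a.
rewrite DS; lra.
Qed.

Lemma E_all n s t : `|Vr s - Vd t| <= D n s t + gamma ^+ n * M.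
Proof.
elim: n s t => [|n IH] s t.
  by rewrite expr0 mul1r /= add0r; exact: (fmax_ub _ (s, t)).
rewrite (hVr s) (hVd t); apply: (@fmax_diff _ _ _ _ _ a0) => a.
exact: Q_of_E.
Qed.

Lemma M_ge0 (s : S) : 0 <= M.
Proof. exact: le_trans (fmax_ub _ (s, s)). Qed.

Lemma V_dbar s t : `|Vr s - Vd t| <= dbar P P' Rw Rw' gamma s t.
Proof.
apply: (@limit_le _ _ _ M gamma) => // n.
have := E_all n s t; have := D_le_dbar n s t; lra.
Qed.

Lemma Q_dbar s t a : `|Qr s a - Qd t a| <= dbar P P' Rw Rw' gamma s t.
Proof.
apply: (@limit_le _ _ _ (gamma * M) gamma) => // n.
have e : gamma ^+ n.+1 * M = gamma ^+ n * (gamma * M) by rewrite exprS; ring.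
have := Q_of_E (@E_all n) s t a; have := D_le_dbar n.+1 s t; lra.
Qed.

End E.
End M.

End Aux.
Import Aux.

Theorem lemma4 (R : realType) (S A : finType) (gamma : R)
  (P P' : S -> A -> S -> R) (Rw Rw' : S -> A -> R)
  (Vstar_real Vstar_DT : S -> R)
  (hgamma0 : 0 < gamma) (hgamma1 : gamma < 1)
  (hP : is_kernel P) (hP' : is_kernel P')
  (hVr : is_optimal_value P Rw gamma Vstar_real)
  (hVd : is_optimal_value P' Rw' gamma Vstar_DT) :
  forall (pi : S -> A) (Vpi_real Vpi_DT : S -> R),
    is_policy_value P Rw gamma pi Vpi_real ->
    is_policy_value P' Rw' gamma pi Vpi_DT ->
    fmax (fun s : S => Vstar_real s - Vpi_real s)
    <= 2 / (1 - gamma) * fmax (fun s : S => dbar P P' Rw Rw' gamma s s)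
       + (1 + gamma) / (1 - gamma) * fmax (fun s : S => Vstar_DT s - Vpi_DT s).
Proof.
move=> pi Vpr Vpd hpr hpd.
case: (pickP (@predT S)) => [s0 _ | hS]; last first.
  have hF : forall x : S, False by move=> x; have := hS x.
  by rewrite !(fmax_empty _ hF) !mulr0 addr0.
set Dm := fmax (fun s : S => dbar P P' Rw Rw' gamma s s).
set Em := fmax (fun s : S => Vstar_DT s - Vpd s).
have dP' : forall s a, dist (P' s a) by move=> s a; exact: hP'.
have dP : forall s a, dist (P s a) by move=> s a; exact: hP.
have [s2 [hm hm']] := fmaxP (fun s => Vpd s - Vstar_DT s) s0.
have hstep : forall s, Vpd s - Vstar_DT s <= gamma * (Vpd s2 - Vstar_DT s2).
  move=> s.
  have q := fmax_ub (fun a => Rw' s a + gamma * \sum_t P' s a t * Vstar_DT t) (pi s).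
  rewrite -(hVd s) in q.
  have av := avg_le (dP' s (pi s)) hm'.
  have sp : \sum_t P' s (pi s) t * (Vpd t - Vstar_DT t) =
      \sum_t P' s (pi s) t * Vpd t - \sum_t P' s (pi s) t * Vstar_DT t.
    by rewrite -sumrB; apply: eq_bigr => t _; rewrite mulrBr.
  rewrite sp in av.
  have av2 := ler_wpM2l (ltW hgamma0) av.
  have := hpd s; lra.
have m0 : Vpd s2 - Vstar_DT s2 <= 0 by have := hstep s2; nra.
have d0 : forall s, 0 <= Vstar_DT s - Vpd s by move=> s; have := hm' s; lra.
have E0 : 0 <= Em by apply: le_trans (fmax_ub _ s0); exact: d0.
have [s1 [hD hD']] := fmaxP (fun s => Vstar_real s - Vpr s) s0.
rewrite hD.
have key : forall s, Vstar_real s - Vpr s <= 2 * Dm + Em + gamma * (Vstar_real s1 - Vpr s1).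
  move=> s.
  have VB := V_dbar (pi s0) hgamma0 hgamma1 hP hP' hVr hVd s s.
  have QB := Q_dbar (pi s0) hgamma0 hgamma1 hP hP' hVr hVd s s (pi s).
  rewrite /= in QB.
  have dD : dbar P P' Rw Rw' gamma s s <= Dm by exact: (fmax_ub (fun s => dbar P P' Rw Rw' gamma s s) s).
  have dE : Vstar_DT s - Vpd s <= Em by exact: (fmax_ub (fun s => Vstar_DT s - Vpd s) s).
  have g1 : 0 <= \sum_t P' s (pi s) t * (Vstar_DT t - Vpd t) by apply: avg_ge => //.
  have sp : \sum_t P' s (pi s) t * (Vstar_DT t - Vpd t) =
      \sum_t P' s (pi s) t * Vstar_DT t - \sum_t P' s (pi s) t * Vpd t.
    by rewrite -sumrB; apply: eq_bigr => t _; rewrite mulrBr.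
  rewrite sp in g1.
  have g2 := mulr_ge0 (ltW hgamma0) g1.
  have av := avg_le (dP s (pi s)) hD'.
  have sp2 : \sum_t P s (pi s) t * (Vstar_real t - Vpr t) =
      \sum_t P s (pi s) t * Vstar_real t - \sum_t P s (pi s) t * Vpr t.
    by rewrite -sumrB; apply: eq_bigr => t _; rewrite mulrBr.
  rewrite sp2 in av.
  have av2 := ler_wpM2l (ltW hgamma0) av.
  move: VB QB; rewrite !ler_norml => /andP[VB1 VB2] /andP[QB1 QB2].
  have := hpd s; have := hpr s; lra.
have k1 := key s1.
have ne : 1 - gamma != 0 by rewrite subr_eq0 gt_eqF.
have -> : 2 / (1 - gamma) * Dm + (1 + gamma) / (1 - gamma) * Em =
   (2 * Dm + (1 + gamma) * Em) / (1 - gamma) by field.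
rewrite ler_pdivlMr; last by rewrite subr_gt0.
have := mulr_ge0 (ltW hgamma0) E0.
lra.
Qed.
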